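(* Let $v\equiv u\equiv 2$ or $5\pmod 6$, let $c<\binom u3$, and let $(u,c)$ satisfy (C1) with associated pair $(\lambda,\varepsilon)$. Suppose $(U,\mathcal F)$ is an NWBTS$(u;c)$ and $(V,\mathcal F')$ is a simple GDD$_\lambda(2,3,v)$ of type $1^{v-u}u^1$ with long group $U\subset V$. Then $(V,\mathcal F\cup\mathcal F')$ is an NWBTS$(v;b)$ where $3b=\lambda\binom v2+\varepsilon$.
   Context: A GDD$_\lambda(2,3,v)$ of type $1^{v-u}u^1$ with long group $U$ on a $v$-set $V\supseteq U$, $|U|=u$, is a family of 3-subsets of $V$ such that no block contains two points of $U$ and every pair of points of $V$ not contained in $U$ lies in exactly $\lambda$ blocks; simple means no repeated blocks. A triple system TS$(v;b)$ is a pair $(V,\mathcal F)$, $V$ a set of $v\ge3$ points, $\mathcal F$ a multiset of $b$ 3-subsets (blocks); simple if no repeated block. $\lambda_{x_1,\dots,x_j}$ is the number of blocks containing $\{x_1,\dots,x_j\}$; $j$-balanced means $|\lambda_{x_1,\dots,x_j}-\lambda_{y_1,\dots,y_j}|\le1$ for all $j$-subsets. Associated pair $(\lambda,\varepsilon)$ of $(v,b)$: $3b=\lambda\binom v2+\varepsilon$, $-v/2<\varepsilon<v/2$. (C1): $v\equiv 2\pmod 3$ and $b\in\{\lfloor \lambda v(v-1)/6\rfloor,\lceil \lambda v(v-1)/6\rceil\}$ with $\lambda\equiv1,2\pmod 3$ if $v\equiv5\pmod6$ and $\lambda\equiv 2,4\pmod 6$ if $v\equiv2\pmod 6$ ($\lambda$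 being that of the associated pair; then $\varepsilon\in\{\pm1,\pm2\}$). Defect graph (when all $\lambda_{x,y}\in\{\lambda-1,\lambda,\lambda+1\}$): graph with edges of pairs with $\lambda_{x,y}=\lambda+1$ (label $+1$) or $\lambda-1$ (label $-1$); isomorphisms preserve labels. $G_{\pm1}$: triangle with two $\pm1$ edges and one $\mp1$ edge; $G_{\pm2}$: 4-cycle with three $\pm1$ edges and one $\mp1$ edge. Under (C1), a TS is nearly 2-balanced if all $\lambda_{x,y}\in\{\lambda-1,\lambda,\lambda+1\}$ and its defect graph is isomorphic to $G_\varepsilon$; an NWBTS$(v;b)$ is a nearly 2-balanced 3-balanced TS$(v;b)$. *)

(* Defs.v *)
From mathcomp Require Import all_boot all_order all_algebra.
Set Implicit Arguments. Unset Strict Implicit. Unset Printing Implicit Defensive.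
Import Order.TTheory GRing.Theory Num.Theory.

(* Points: a finite type T; point sets are {set T}; a (multi)set of blocks is
   a sequence of sets (repetitions allowed = multiset). *)

Section TS.
Variable T : finType.

Definition lamS (B : seq {set T}) (S : {set T}) : nat :=
  count (fun b : {set T} => S \subset b) B.

Definition is_TS (P : {set T}) (B : seq {set T}) : Prop :=
  3 <= #|P| /\ (forall b, b \in B -> b \subset P /\ #|b| = 3).

Definition j_balanced (j : nat) (P : {set T}) (B : seq {set T}) : Prop :=
  forall S1 S2 : {set T}, S1 \subset P -> S2 \subset P ->
    #|S1| = j -> #|S2| = j -> lamS B S1 <= lamS B S2 + 1.

Definition assoc_pair (v b lam : nat) (eps : int) : Prop :=
  ((3 * b)%:Z = (lam * 'C(v, 2))%:Z + eps)%R /\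
  (- (v%:Z) < 2 * eps)%R /\ (2 * eps < v%:Z)%R.

Definition C1 (v b : nat) : Prop :=
  exists lam eps, assoc_pair v b lam eps /\
    v %% 3 = 2 /\
    (b = (lam * v * (v - 1)) %/ 6 \/ b = (lam * v * (v - 1) + 5) %/ 6) /\
    (v %% 6 = 5 -> lam %% 3 = 1 \/ lam %% 3 = 2) /\
    (v %% 6 = 2 -> lam %% 6 = 2 \/ lam %% 6 = 4).

Definition defect (B : seq {set T}) (lam : nat) (x y : T) : int :=
  ((lamS B [set x; y])%:Z - lam%:Z)%R.

(* The defect graph (edges = pairs with nonzero defect, labelled by it) is
   isomorphic (as an edge-labelled graph) to the graph on 'I_n with labels gl
   (gl i j = 0 meaning no edge). *)
Definition defect_iso (P : {set T}) (B : seq {set T}) (lam n : nat)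
    (gl : 'I_n -> 'I_n -> int) : Prop :=
  exists f : 'I_n -> T,
    injective f /\ (forall i, f i \in P) /\
    (forall i j, i != j -> defect B lam (f i) (f j) = gl i j) /\
    (forall x y, x \in P -> y \in P -> x != y -> defect B lam x y != 0%R ->
       exists i j, x = f i /\ y = f j).

End TS.

(* G_{+-1}: triangle with two (+-1) edges {0,1},{1,2} and one (-+1) edge {0,2} *)
Definition tri_label (s : int) (i j : 'I_3) : int :=
  if i == j then 0%R else if (i + j == 2)%N then (- s)%R else s.

(* G_{+-2}: 4-cycle 0-1-2-3-0, edges {0,1},{1,2},{2,3} labelled s, {3,0} labelled -s *)
Definition cyc_label (s : int) (i j : 'I_4) : int :=
  if (i.+1 == j %[mod 4]) || (j.+1 == i %[mod 4]) then
    (if (minn i j == 0) && (maxn i j == 3) then (- s)%R else s)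
  else 0%R.

Definition defect_iso_G (T : finType) (P : {set T}) (B : seq {set T})
    (lam : nat) (eps : int) : Prop :=
  if eps == 1%R then defect_iso P B lam (tri_label 1)
  else if eps == (-1)%R then defect_iso P B lam (tri_label (-1))
  else if eps == 2%R then defect_iso P B lam (cyc_label 1)
  else if eps == (-2)%R then defect_iso P B lam (cyc_label (-1))
  else False.

Definition nearly_2_balanced (T : finType) (P : {set T}) (B : seq {set T}) : Prop :=
  C1 #|P| (size B) /\
  exists lam eps, assoc_pair #|P| (size B) lam eps /\
    (forall x y, x \in P -> y \in P -> x != y ->
       lam.-1 <= lamS B [set x; y] <= lam.+1) /\
    defect_iso_G P B lam eps.

Definition NWBTS (T : finType) (P : {set T}) (B : seq {set T}) : Prop :=
  is_TS P B /\ nearly_2_balanced P B /\ j_balanced 3 P B.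

Definition simple_GDD (T : finType) (lam : nat) (V U : {set T}) (B : seq {set T}) : Prop :=
  U \subset V /\ uniq B /\
  (forall b, b \in B -> b \subset V /\ #|b| = 3 /\ #|b :&: U| <= 1) /\
  (forall x y, x \in V -> y \in V -> x != y -> ~~ ((x \in U) && (y \in U)) ->
     lamS B [set x; y] = lam).

(* Main.v *)
Require Import Defs.
From mathcomp Require Import all_boot all_order all_algebra.
From mathcomp Require Import zify.
Set Implicit Arguments. Unset Strict Implicit. Unset Printing Implicit Defensive.
Import Order.TTheory GRing.Theory Num.Theory.

Lemma bin2_mul n : 2 * 'C(n, 2) = n * n.-1.
Proof. by rewrite -mul_bin_diag bin1. Qed.

Section H.
Variable T : finType.
Implicit Types (B : seq {set T}) (S A : {set T}).

Lemma lamS0 B S : (forall b, b \in B -> ~~ (S \subset b)) -> lamS B S = 0.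
Proof.
move=> H; rewrite /lamS (eq_in_count (a2 := pred0)) ?count_pred0 //.
by move=> b /H /negbTE.
Qed.

Lemma lamS_cat B1 B2 S : lamS (B1 ++ B2) S = lamS B1 S + lamS B2 S.
Proof. by rewrite /lamS count_cat. Qed.

Lemma sum_lamS (P : {set {set T}}) B :
  \sum_(p in P) lamS B p = \sum_(b <- B) #|[set p in P | p \subset b]|.
Proof.
elim: B => [|b B IH]; first by rewrite big_nil big1.
rewrite big_cons -IH /lamS /=.
rewrite big_split /=; congr (_ + _).
rewrite -sum1_card [LHS]big_mkcond [RHS]big_mkcond /=.
apply: eq_bigr => p _; rewrite inE.
by case: (p \in P); case: (p \subset b).
Qed.

Lemma sum_lamS_k A B k : (forall b, b \in B -> b \subset A /\ #|b| = 3) ->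
  \sum_(p in [set p : {set T} | p \subset A & #|p| == k]) lamS B p = 'C(3, k) * size B.
Proof.
move=> HB; rewrite sum_lamS.
rewrite (eq_big_seq (fun _ => 'C(3, k))); last first.
  move=> b /HB [bA b3].
  rewrite -b3 -cards_draws; apply: eq_card => p; rewrite !inE.
  case pb: (p \subset b); rewrite ?andbF ?andbT ?andbF //=.
  by rewrite (subset_trans pb bA).
by rewrite big_const_seq count_predT iter_addn_0 mulnC.
Qed.
Lemma lamS_le1 B S : uniq B -> (forall b, b \in B -> #|b| = 3) -> #|S| = 3 -> lamS B S <= 1.
Proof.
move=> uB HB S3; rewrite /lamS (eq_in_count (a2 := pred1 S)).
  by rewrite count_uniq_mem // leq_b1.
move=> b bB /=; apply/idP/idP => [Sb|/eqP ->//].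
by rewrite eq_sym eqEcard Sb HB // S3.
Qed.

Lemma card2_decomp (p : {set T}) : #|p| == 2 -> exists x y, x != y /\ p = [set x; y].
Proof. by move/cards2P. Qed.

Lemma pair_sub x y A : ([set x; y] \subset A) = (x \in A) && (y \in A).
Proof.
apply/subsetP/andP => [H|[xA yA] z]; first by split; apply: H; rewrite !inE eqxx ?orbT.
by rewrite !inE => /orP[] /eqP ->.
Qed.

Lemma iso_lift (V U : {set T}) F F' lam n (gl : 'I_n -> 'I_n -> int) :
  U \subset V ->
  (forall x y, x \in U -> y \in U -> x != y -> lamS F' [set x; y] = 0) ->
  (forall x y, x \in V -> y \in V -> x != y -> ~~ ((x \in U) && (y \in U)) ->
     lamS (F ++ F') [set x; y] = lam) ->
  defect_iso U F lam gl -> defect_iso V (F ++ F') lam gl.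
Proof.
move=> UV H0 Hl [f [finj [fU [fd fall]]]]; exists f; split => //; split.
  by move=> i; apply: (subsetP UV).
split.
  move=> i j ij; rewrite -fd // /defect lamS_cat H0 ?addn0 //.
  by rewrite (inj_eq finj).
move=> x y xV yV xy.
case xyU: ((x \in U) && (y \in U)).
  move/andP: xyU => [xU yU]; rewrite /defect lamS_cat H0 // addn0 => hd.
  exact: fall.
by rewrite /defect Hl ?xyU // subrr eqxx.
Qed.

End H.

Lemma assoc_uniq u c l1 e1 l2 e2 : 3 <= u ->
  assoc_pair u c l1 e1 -> assoc_pair u c l2 e2 -> l1 = l2 /\ e1 = e2.
Proof.
move=> u3 [h1 [h2 h3]] [h4 [h5 h6]].
have hK := bin2_mul u.
move: h1 h4 hK; set K := 'C(u, 2) => h1 h4 hK.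
have Ku : u <= K by nia.
have : l1 = l2.
  move: h1 h4; rewrite !PoszD !PoszM => h1 h4.
  have: ((l1%:Z - l2%:Z) * K%:Z = e2 - e1)%R by lia.
  nia.
move=> el; split=> //; subst; lia.
Qed.

Theorem lemma3p2 (T : finType) (V U : {set T}) (u v c lam : nat) (eps : int)
  (F F' : seq {set T}) :
  #|V| = v -> #|U| = u ->
  v = u %[mod 6] -> (u %% 6 = 2 \/ u %% 6 = 5) ->
  c < 'C(u, 3) ->
  C1 u c -> assoc_pair u c lam eps ->
  size F = c ->
  NWBTS U F ->
  simple_GDD lam V U F' ->
  NWBTS V (F ++ F') /\
  ((3 * size (F ++ F'))%:Z = (lam * 'C(v, 2))%:Z + eps)%R.
Proof.
move=> hV hU hmod hu6 hc hC1 hap hsize hN hG.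
case: hN => [[hU3 hFb] [[_ [lam0 [eps0 [hap0 [hrng hiso]]]]] hbal]].
case: hG => [UV [uF' [hF'b hF'pair]]].
have u3 : 3 <= u by rewrite -hU.
rewrite hU hsize in hap0; case: (assoc_uniq u3 hap0 hap) => ? ?; subst lam0 eps0.
case: hC1 => [lam1 [eps1 [hap1 [hu3m [hcdiv [h5 h2]]]]]].
case: (assoc_uniq u3 hap1 hap) => ? ?; subst lam1 eps1.
have F'U x y : x \in U -> y \in U -> x != y -> lamS F' [set x; y] = 0.
  move=> xU yU xy; apply: lamS0 => b /hF'b [_ [_ b1]].
  apply/negP => sb.
  have : [set x; y] \subset b :&: U by rewrite subsetI sb pair_sub xU yU.
  move/subset_leq_card; rewrite cards2 xy => h; have := leq_trans h b1; by [].
have FnU (S : {set T}) : ~~ (S \subset U) -> lamS F S = 0.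
  move=> nS; apply: lamS0 => b /hFb [bU _]; apply/negP => Sb.
  by rewrite (subset_trans Sb bU) in nS.
have F'out x y : x \in V -> y \in V -> x != y -> ~~ ((x \in U) && (y \in U)) ->
    lamS (F ++ F') [set x; y] = lam.
  move=> xV yV xy nU; rewrite lamS_cat hF'pair // FnU //.
  by rewrite pair_sub.
have vu : u <= v by rewrite -hU -hV subset_leq_card.

have hcnt : 3 * size F' + lam * 'C(u, 2) = lam * 'C(v, 2).
  have hF'b' : forall b, b \in F' -> b \subset V /\ #|b| = 3.
    by move=> b /hF'b [? [? _]].
  have := sum_lamS_k 2 hF'b'; rewrite (bigID (fun p : {set T} => p \subset U)) /=.
  rewrite big1 ?add0n; last first.
    move=> p /andP []; rewrite inE => /andP [pV /card2_decomp [x [y [xy ->]]]].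
    by rewrite pair_sub => /andP [xU yU]; apply: F'U.
  rewrite (eq_bigr (fun _ => lam)); last first.
    move=> p /andP []; rewrite inE => /andP [pV /card2_decomp [x [y [xy pe]]]].
    move: pV; rewrite pe !pair_sub => /andP [xV yV] nU; exact: hF'pair.
  rewrite (eq_bigr (fun _ => lam * 1)); last by move=> *; rewrite muln1.
  rewrite -big_distrr /= => hsum.
  have htot := cards_draws V 2; rewrite -sum1_card (bigID (fun p : {set T} => p \subset U)) /= in htot.
  have hU2 : \sum_(i in [set A : {set T} | A \subset V & #|A| == 2] | i \subset U) 1 = 'C(u, 2).
    rewrite -hU -cards_draws -sum1_card; apply: eq_bigl => p; rewrite !inE.
    case pU: (p \subset U); rewrite ?andbT ?andbF //.
    by rewrite (subset_trans pU UV).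
  rewrite hU2 hV in htot; rewrite -htot mulnDr -hsum; lia.

have hle1 : forall S : {set T}, S \subset U -> #|S| = 3 -> lamS F S <= 1.
  have [p0 p0in p00] : exists2 p0, p0 \in [set A : {set T} | A \subset U & #|A| == 3] & lamS F p0 = 0.
    case/boolP: [exists p0 in [set A : {set T} | A \subset U & #|A| == 3], lamS F p0 == 0].
      by case/existsP => p0 /andP [h /eqP]; exists p0.
    move/existsPn => hall.
    have := sum_lamS_k 3 hFb; rewrite hsize mul1n => hs.
    have : 'C(u, 3) <= c.
      rewrite -hs -hU -cards_draws -sum1_card; apply: leq_sum => p pin.
      by move: (hall p); rewrite pin /= lt0n.
    by rewrite leqNgt hc.
  move=> S SU S3; move: p0in; rewrite inE => /andP [p0U /eqP p03].
  by have := hbal S p0 SU p0U S3 p03; rewrite p00.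
have hle1V : forall S : {set T}, S \subset V -> #|S| = 3 -> lamS (F ++ F') S <= 1.
  move=> S SV S3; rewrite lamS_cat.
  case SU: (S \subset U).
    rewrite (@lamS0 _ F') ?addn0 ?hle1 //.
    move=> b /hF'b [_ [_ b1]]; apply/negP => Sb.
    have : S \subset b :&: U by rewrite subsetI Sb SU.
    by move/subset_leq_card; rewrite S3 => h; have := leq_trans h b1.
  rewrite FnU ?SU // add0n; apply: lamS_le1 => // b /hF'b [_ [-> _]].
  done.
have hFU : forall x y, x \in U -> y \in U -> x != y ->
    lamS (F ++ F') [set x; y] = lamS F [set x; y].
  by move=> x y xU yU xy; rewrite lamS_cat F'U ?addn0.
have heq : ((3 * size (F ++ F'))%:Z = (lam * 'C(v, 2))%:Z + eps)%R.
  case: hap => hap _; move: hap hcnt; rewrite size_cat -hsize.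
  move: (lam * 'C(u, 2)) (lam * 'C(v, 2)) => X Y; lia.
split=> //.
have Lv := bin2_mul v.
have Lu := bin2_mul u.
have eps2 : (-2 <= eps <= 2)%R.
  case: hap => hap _.
  have hX : lam * u * (u - 1) = 2 * (lam * 'C(u, 2)) by rewrite subn1 -mulnA -Lu mulnCA.
  rewrite hX in hcdiv; move: hap hcdiv; move: (lam * 'C(u, 2)) => X.
  lia.
split; [split|split].
- by rewrite (leq_trans hU3) // subset_leq_card.
- move=> b; rewrite mem_cat => /orP [/hFb [bU ->]|/hF'b [? [? _]]] //.
  by rewrite (subset_trans bU UV).
- split.
    exists lam, eps; split; first by split => //; case: hap => _; rewrite hV; lia.
    split; first by rewrite hV; lia.
    split.
      rewrite hV.
      have hY : lam * v * (v - 1) = 2 * (lam * 'C(v, 2)) by rewrite subn1 -mulnA -Lv mulnCA.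
      rewrite hY; move: heq eps2; move: (lam * 'C(v, 2)) => Y; lia.
    by rewrite hV hmod.
  exists lam, eps; split; first by split => //; case: hap => _; rewrite hV; lia.
  split.
    move=> x y xV yV xy.
    case xyU: ((x \in U) && (y \in U)).
      by move/andP: xyU => [xU yU]; rewrite hFU //; apply: hrng.
    by rewrite F'out ?xyU // leq_pred leqnSn.
  move: hiso; rewrite /defect_iso_G.
  have IL := iso_lift UV F'U F'out.
  by case: ifP => _; [apply: IL | case: ifP => _; [apply: IL | case: ifP => _; [apply: IL | case: ifP => _; [apply: IL|]]]].
- move=> S1 S2 S1V S2V S13 S23; exact: leq_trans (hle1V _ S1V S13) (leq_addl _ _).
Qed.
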